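(* Let $q$ be a prime power and $0\le k\le n$. Let $1\le j\le n$ and let $\begin{pmatrix} v_j & \cdots & v_1\\ X_j & \cdots & X_1\end{pmatrix}$ be a $(k+1)\times j$ array which occurs as the first $j$ columns (columns $j,\dots,1$) of the extended representation $\mathrm{EXT}(Y)$ of at least one $Y\in\mathcal{G}_q(n,k)$. Let $w_j=\sum_{\ell=1}^{j}v_\ell$. Then the number $N\begin{pmatrix} v_j & \cdots & v_1\\ X_j & \cdots & X_1\end{pmatrix}$ of subspaces $X\in\mathcal{G}_q(n,k)$ whose extended representation has exactly these first $j$ columns equals $\left[\begin{smallmatrix} n-j\\ k-w_j\end{smallmatrix}\right]_q$.
   Context: $\mathbb{F}_q$ is the finite field of size $q$; its elements are identified with $\mathbb{Z}_q=\{0,\dots,q-1\}$ by a fixed bijection (with $0\mapsto 0$, $1\mapsto 1$). $\mathcal{G}_q(n,k)$ is the set of all $k$-dimensional subspaces of $\mathbb{F}_q^n$. The $q$-ary Gaussian coefficient is $\left[\begin{smallmatrix} n\\ k\end{smallmatrix}\right]_q=\prod_{i=0}^{k-1}\frac{q^{n-i}-1}{q^{k-i}-1}$, with $\left[\begin{smallmatrix} n\\ 0\end{smallmatrix}\right]_q=1$ and $\left[\begin{smallmatrix} n\\ k\end{smallmatrix}\right]_q=0$ if $k>n$ or $k<0$. For $X\in\mathcal{G}_q(n,k)$, $\mathrm{RE}(X)$ is the unique $k\times n$ matrix in reduced row echelon form whose rows span $X$; its columns are labelled $X_n,\dots,X_2,X_1$ from left to right (so $X_1$ is the rightmost column). The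 identifying vector $v(X)=(v(X)_n,\dots,v(X)_1)$ is the binary vector of weight $k$ with $v(X)_i=1$ iff column $X_i$ of $\mathrm{RE}(X)$ contains the leading one (pivot) of some row. The extended representation $\mathrm{EXT}(X)$ is the $(k+1)\times n$ matrix whose top row is $v(X)$ and whose remaining $k$ rows are $\mathrm{RE}(X)$; its $i$-th column is $\binom{v(X)_i}{X_i}$, and ''the first $j$ columns'' means the columns indexed $1,\dots,j$ (the rightmost $j$ columns). *)

(* Defs.v *)
From HB Require Import structures.
From mathcomp Require Import all_boot all_order all_algebra.
Set Implicit Arguments. Unset Strict Implicit. Unset Printing Implicit Defensive.
Import GRing.Theory.
Local Open Scope ring_scope.

(* Columns of a k x n matrix are indexed by 'I_n with 0-based index c from the
   left; the paper's label of column c is X_(n - c).  So the paper's "first j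
   columns" (labels j,...,1) are the rightmost j columns, 0-based indices
   n-j, ..., n-1, appearing in this left-to-right order. *)

Section Defs.
Variable F : finFieldType.

(* Subspaces of F^n are represented canonically (mxalgebra) by square
   matrices X with <<X>> = X; the subspace is the row space of X. *)
Definition Grass (n k : nat) : {set 'M[F]_n} :=
  [set X : 'M[F]_n | (<<X>>%MS == X) && (\rank X == k)].

Definition is_pivot (k n : nat) (M : 'M[F]_(k, n)) (i : 'I_k) (c : 'I_n) : bool :=
  (M i c == 1) && [forall c' : 'I_n, (c' < c)%N ==> (M i c' == 0)].

Definition is_rref (k n : nat) (M : 'M[F]_(k, n)) : bool :=
  [&& [forall i : 'I_k, exists c : 'I_n, is_pivot M i c],
      [forall i : 'I_k, forall i' : 'I_k, forall c : 'I_n, forall c' : 'I_n,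
         [&& (i < i')%N, is_pivot M i c & is_pivot M i' c'] ==> (c < c')%N] &
      [forall i : 'I_k, forall c : 'I_n, forall i' : 'I_k,
         (is_pivot M i c && (i' != i)) ==> (M i' c == 0)]].

Definition RE (k n : nat) (X : 'M[F]_n) : 'M[F]_(k, n) :=
  odflt 0 [pick M : 'M[F]_(k, n) | is_rref M && (<<M>>%MS == X)].

Definition idvec (k n : nat) (X : 'M[F]_n) : 'rV[F]_n :=
  \row_c (if [exists i, is_pivot (RE k X) i c] then 1 else 0).

Definition EXT (k n : nat) (X : 'M[F]_n) : 'M[F]_(k.+1, n) :=
  col_mx (idvec k X) (RE k X).

Definition entry (r n : nat) (M : 'M[F]_(r, n)) (i : 'I_r) (c : nat) : F :=
  if insub c is Some c' then M i c' else 0.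

Definition firstcols (r n : nat) (j : nat) (M : 'M[F]_(r, n)) : 'M[F]_(r, j) :=
  \matrix_(i < r, c < j) entry M i (n - j + c).

End Defs.

Definition gauss (q n k : nat) : nat :=
  if (k <= n)%N then
    ((\prod_(i < k) (q ^ (n - i) - 1)) %/ (\prod_(i < k) (q ^ (k - i) - 1)))%N
  else 0%N.

(* Main.v *)
Require Import Defs.
From HB Require Import structures.
From mathcomp Require Import all_boot all_order all_algebra.
From mathcomp Require Import zify.
Set Implicit Arguments. Unset Strict Implicit. Unset Printing Implicit Defensive.
Import GRing.Theory.
Local Open Scope ring_scope.


Section Rref.
Variable F : finFieldType.

Lemma pivot_unique k n (M : 'M[F]_(k,n)) i c c' :
  is_pivot M i c -> is_pivot M i c' -> c = c'.
Proof.
have H : forall c c', is_pivot M i c -> is_pivot M i c' -> ~ (c < c')%N.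
  move=> a b /andP[/eqP Ha _] /andP[_ /forallP Hb] ab.
  by move: (Hb a); rewrite ab /= Ha oner_eq0.
move=> Hc Hc'; apply/val_inj; case: (ltngtP c c') => // h.
  by case: (H _ _ Hc Hc' h).
by case: (H _ _ Hc' Hc h).
Qed.

Definition rrefp k n (M : 'M[F]_(k,n)) (p : 'I_k -> 'I_n) :=
  [/\ forall i, is_pivot M i (p i),
      forall i i' : 'I_k, (i < i')%N -> (p i < p i')%N &
      forall i i' : 'I_k, i' != i -> M i' (p i) = 0].

Lemma rrefP k n (M : 'M[F]_(k,n)) : is_rref M -> exists p, rrefp M p.
Proof.
case/and3P=> /forallP H1 /forallP H2 /forallP H3.
have [p Hp] : exists p : 'I_k -> 'I_n, forall i, is_pivot M i (p i).
  have H : forall i, exists c, is_pivot M i c by move=> i; apply/existsP; apply: H1.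
  by case/fin_all_exists: H => p Hp; exists p.
exists p; split=> //.
- move=> i i' ii'; move: (H2 i) => /forallP/(_ i')/forallP/(_ (p i))/forallP/(_ (p i'))/implyP.
  by apply; rewrite ii' !Hp.
- move=> i i' ne; apply/eqP.
  move: (H3 i) => /forallP/(_ (p i))/forallP/(_ i')/implyP; apply.
  by rewrite Hp ne.
Qed.

Lemma rrefE k n (M : 'M[F]_(k,n)) p : rrefp M p -> is_rref M.
Proof.
case=> H1 H2 H3; apply/and3P; split.
- by apply/forallP => i; apply/existsP; exists (p i).
- apply/forallP=> i; apply/forallP=> i'; apply/forallP=> c; apply/forallP=> c'.
  apply/implyP=> /and3P[ii' pc pc'].
  by rewrite (pivot_unique pc (H1 i)) (pivot_unique pc' (H1 i')) H2.
- apply/forallP=> i; apply/forallP=> c; apply/forallP=> i'.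
  apply/implyP=> /andP[pc ne].
  by rewrite (pivot_unique pc (H1 i)) H3.
Qed.

Lemma pivot1 k n (M : 'M[F]_(k,n)) i c : is_pivot M i c -> M i c = 1.
Proof. by case/andP=> /eqP. Qed.

Lemma pivot0 k n (M : 'M[F]_(k,n)) i c (c' : 'I_n) : is_pivot M i c -> (c' < c)%N -> M i c' = 0.
Proof. by case/andP=> _ /forallP/(_ c')/implyP H /H/eqP. Qed.

Lemma rrefp_col k n (M : 'M[F]_(k,n)) p : rrefp M p ->
  forall i i', M i' (p i) = (i' == i)%:R.
Proof.
case=> H1 _ H3 i i'; case: eqP => [->|/eqP ne]; first by rewrite (pivot1 (H1 i)).
by rewrite H3.
Qed.

Lemma rrefp_inj k n (M : 'M[F]_(k,n)) p : rrefp M p -> injective p.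
Proof.
case=> _ H2 _ i i' e; apply/val_inj; case: (ltngtP i i') => // h;
  by move: (H2 _ _ h); rewrite e ltnn.
Qed.

Lemma rrefp_coef k n (M : 'M[F]_(k,n)) p (c : 'rV[F]_k) l :
  rrefp M p -> (c *m M) 0 (p l) = c 0 l.
Proof.
move=> Hp; rewrite mxE (bigD1 l) //= (rrefp_col Hp) eqxx mulr1 big1 ?addr0 //.
by move=> i ne; rewrite (rrefp_col Hp) (negbTE ne) mulr0.
Qed.

Lemma rrefp_rank k n (M : 'M[F]_(k,n)) p : rrefp M p -> \rank M = k.
Proof.
move=> Hp; apply/eqP; rewrite -/(row_free M); apply/row_freeP.
exists (\matrix_(c, l) (c == p l)%:R); apply/matrixP => i l.
rewrite !mxE (bigD1 (p l)) //= mxE eqxx mulr1 big1 ?addr0.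
  by rewrite (rrefp_col Hp).
by move=> c ne; rewrite mxE (negbTE ne) mulr0.
Qed.

Lemma rrefp_expand k n (M : 'M[F]_(k,n)) p (v : 'rV[F]_n) :
  rrefp M p -> (v <= M)%MS -> v = (\row_l v 0 (p l)) *m M.
Proof.
move=> Hp /submxP[c ->]; congr (_ *m _); apply/rowP => l.
by rewrite mxE rrefp_coef.
Qed.

Lemma lead_unique n (v : 'rV[F]_n) (a b : 'I_n) :
  (forall x : 'I_n, (x < a)%N -> v 0 x = 0) -> v 0 a != 0 ->
  (forall x : 'I_n, (x < b)%N -> v 0 x = 0) -> v 0 b != 0 -> a = b.
Proof.
move=> Ha na Hb nb; apply/val_inj; case: (ltngtP a b) => // h.
  by move: na; rewrite Hb ?eqxx.
by move: nb; rewrite Ha ?eqxx.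
Qed.

Lemma lead_comb k n (M : 'M[F]_(k,n)) p (c : 'rV[F]_k) (l : 'I_k) :
  rrefp M p -> (forall l' : 'I_k, (l' < l)%N -> c 0 l' = 0) ->
  forall x : 'I_n, (x < p l)%N -> (c *m M) 0 x = 0.
Proof.
move=> Hp Hc x xl; rewrite mxE big1 // => l' _.
case: (ltnP l' l) => h; first by rewrite Hc // mul0r.
case: Hp => H1 H2 _; rewrite (pivot0 (H1 l')) ?mulr0 //.
apply: (leq_trans xl); case: (ltngtP l l') h => // [/H2 /ltnW //|].
by move=> e _; have -> : l = l' by apply/val_inj.
Qed.

Lemma incr_id k (f : 'I_k -> 'I_k) :
  (forall i i' : 'I_k, (i < i')%N -> (f i < f i')%N) -> forall i, f i = i.
Proof.
case: k f => [|k] f Hf i; first by case: i.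
have H : forall d (i : 'I_k.+1), (i + d <= k)%N -> (f i + d <= f (inord (i + d)))%N.
  elim=> [|d IH] i0 h; first by rewrite !addn0 inord_val.
  have h' : (i0 + d <= k)%N by lia.
  have := IH i0 h'.
  have : (f (inord (i0 + d)) < f (inord (i0 + d.+1)))%N.
    by apply: Hf; rewrite !inordK; lia.
  lia.
have fi := ltn_ord (f i); have ii := ltn_ord i.
apply/ord_inj/eqP; rewrite eqn_leq; apply/andP; split.
  have := H (k - i)%N i; have -> : (i + (k - i) = k)%N by lia.
  have := ltn_ord (f (inord k)); move=> a b; have := b (leqnn k); lia.
have := H (val i) ord0; rewrite add0n inord_val /= => h; have := h ltac:(lia); lia.
Qed.

Lemma rref_uniq k n (M N : 'M[F]_(k,n)) :
  is_rref M -> is_rref N -> (M == N)%MS -> M = N.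
Proof.
move=> /rrefP[p Hp] /rrefP[r Hr] /andP[MN NM].
have [Hr1 Hr2 Hr3] := Hr; have [Hp1 Hp2 Hp3] := Hp.
have Hpr : forall i, exists l, r i = p l.
  move=> i; set c := \row_l N i (p l).
  have ev : row i N = c *m M.
    rewrite {1}(rrefp_expand Hp (submx_trans (row_sub i N) NM)).
    by congr (_ *m _); apply/rowP => l; rewrite !mxE.
  have [l0 Hl0] : exists l, c 0 l != 0.
    case/boolP: [exists l, c 0 l != 0] => [/existsP //|/existsPn H0].
    have : (c *m M) 0 (r i) = 0.
      rewrite mxE big1 // => l _; by rewrite (eqP (negPn (H0 l))) mul0r.
    by rewrite -ev mxE (pivot1 (Hr1 i)) => /eqP; rewrite oner_eq0.
  case: (@arg_minnP _ l0 (fun l => c 0 l != 0) val Hl0) => l Hl lmin.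
  exists l; apply: (@lead_unique n (row i N)).
  - by move=> x xr; rewrite mxE (pivot0 (Hr1 i)).
  - by rewrite mxE (pivot1 (Hr1 i)) oner_eq0.
  - rewrite ev; apply: lead_comb => // l' l'l; apply/eqP; apply/negP => /negP H.
    by move: (lmin l' H); rewrite leqNgt l'l.
  - by rewrite ev rrefp_coef.
case/fin_all_exists: Hpr => f Hf.
have finc : forall i i' : 'I_k, (i < i')%N -> (f i < f i')%N.
  move=> i i' ii'; have := Hr2 _ _ ii'; rewrite !Hf.
  case: (ltngtP (f i) (f i')) => // [/Hp2|e].
    by move=> h1 h2; move: (ltn_trans h1 h2); rewrite ltnn.
  move=> h; have e2 : f i = f i' by apply: ord_inj.
  by move: h; rewrite e2 ltnn.
have rp : forall i, r i = p i by move=> i; rewrite Hf incr_id.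
apply/row_matrixP => i; have := rrefp_expand Hp (submx_trans (row_sub i N) NM); move=> ->; rewrite [row i M]rowE.
congr (_ *m _); apply/rowP => l; rewrite !mxE -rp (rrefp_col Hr) eq_sym.
by [].
Qed.

Lemma is_pivot_ext k k' n (M : 'M[F]_(k,n)) (N : 'M[F]_(k',n)) i i' c :
  (forall c, M i c = N i' c) -> is_pivot M i c = is_pivot N i' c.
Proof.
move=> E; rewrite /is_pivot E; congr (_ && _); apply: eq_forallb => c'.
by rewrite E.
Qed.

Lemma vanish_sub m n (X : 'M[F]_(m,n)) (v : 'rV[F]_n) c :
  (forall i, X i c = 0) -> (v <= X)%MS -> v 0 c = 0.
Proof.
move=> H /submxP[D ->]; rewrite mxE big1 // => i _; by rewrite H mulr0.
Qed.

Lemma rref_exists n k (X : 'M[F]_n) : \rank X = k ->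
  exists M : 'M[F]_(k,n), is_rref M && (M == X)%MS.
Proof.
elim: k X => [|k IH] X rX.
  exists 0; apply/andP; split.
    by apply/and3P; split; apply/forallP => -[].
  move/eqP: rX; rewrite mxrank_eq0 => /eqP ->; by rewrite /eqmx !sub0mx.
have [i0 [p0 Hip0]] : exists i c, X i c != 0.
  case/boolP: [exists i, exists c, X i c != 0] => [/existsP[i /existsP[c h]]|/existsPn H].
    by exists i, c.
  suff : X = 0 by move=> X0; move: rX; rewrite X0 mxrank0.
  apply/matrixP => i c; move: (H i) => /existsPn/(_ c)/negPn/eqP ->; by rewrite mxE.
have P0 : [exists i, X i p0 != 0] by apply/existsP; exists i0.
case: (@arg_minnP _ p0 (fun c => [exists i, X i c != 0]) val P0) => p /existsP[i1 Hi1] pmin.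
have van : forall c : 'I_n, (c < p)%N -> forall i, X i c = 0.
  move=> c cp i; apply/eqP; apply/negP => /negP h.
  have := pmin c (introT existsP (ex_intro _ i h)); by rewrite leqNgt cp.
pose u := (X i1 p)^-1 *: row i1 X.
have uX : (u <= X)%MS by rewrite scalemx_sub ?row_sub.
have up : u 0 p = 1 by rewrite !mxE mulVf.
pose A := \col_(c < n) ((c == p)%:R : F).
pose K := kermx A.
have inK : forall v : 'rV[F]_n, (v <= K)%MS = (v 0 p == 0).
  move=> v; rewrite sub_kermx; apply/eqP/eqP => [/matrixP/(_ 0 0)|h].
    rewrite !mxE (bigD1 p) //= big1 ?addr0 ?mxE ?eqxx ?mulr1 // => c ne.
    by rewrite mxE (negbTE ne) mulr0.
  apply/matrixP => a b; rewrite !ord1 !mxE (bigD1 p) //= big1 ?addr0 ?mxE ?eqxx ?mulr1 //.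
  by move=> c ne; rewrite mxE (negbTE ne) mulr0.
pose Y := (X :&: K)%MS.
have rA : \rank A = 1%N.
  apply/eqP; rewrite eqn_leq rank_leq_col lt0n mxrank_eq0; apply/eqP => /matrixP/(_ p 0).
  by rewrite !mxE eqxx => /eqP; rewrite oner_eq0.
have rK : \rank K = n.-1 by rewrite mxrank_ker rA subn1.
have rY : \rank Y = k.
  have h1 := mxrank_sum_cap X K; have h2 := rank_leq_col (X + K)%MS.
  have h3 : (\rank Y < \rank X)%N.
    apply: rank_ltmx; rewrite ltmxE capmxSl /=; apply/negP => XY.
    have : (u <= K)%MS by apply: submx_trans (submx_trans uX XY) (capmxSr _ _).
    by rewrite inK up oner_eq0.
  move: h1 h2 h3; rewrite rX rK -/Y; have : (0 < n)%N by apply: leq_ltn_trans (ltn_ord p).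
  lia.
have [M' /andP[rM' /andP[M'Y YM']]] := IH Y rY.
have [p' Hp'] := rrefP rM'; have [H1 H2 H3] := Hp'.
have M'X : (M' <= X)%MS by apply: submx_trans M'Y (capmxSl _ _).
have M'K : (M' <= K)%MS by apply: submx_trans M'Y (capmxSr _ _).
have vM' : forall j (c : 'I_n), (c <= p)%N -> M' j c = 0.
  move=> j c; rewrite leq_eqVlt => /orP[/eqP e|cp].
    have e' : c = p by apply: ord_inj.
    have := submx_trans (row_sub j M') M'K; rewrite inK e' mxE => /eqP //.
  have := vanish_sub (van c cp) (submx_trans (row_sub j M') M'X); by rewrite mxE.
have pp' : forall j, (p < p' j)%N.
  move=> j; rewrite ltnNge; apply/negP => h; move: (vM' j _ h).
  by rewrite (pivot1 (H1 j)) => /eqP; rewrite oner_eq0.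
pose t := u - (\row_l u 0 (p' l)) *m M'.
have t_lt : forall c : 'I_n, (c < p)%N -> t 0 c = 0.
  move=> c cp; rewrite mxE (vanish_sub (van c cp) uX) mxE mxE big1 ?subr0 // => l _.
  by rewrite vM' ?mulr0 // ltnW.
have t_p : t 0 p = 1 by rewrite mxE up mxE mxE big1 ?subr0 // => l _; rewrite vM' ?mulr0.
have t_p' : forall j, t 0 (p' j) = 0.
  by move=> j; rewrite mxE [X in _ + X]mxE rrefp_coef // !mxE subrr.
have tX : (t <= X)%MS.
  rewrite addmx_sub // eqmx_opp; exact: submx_trans (submxMl _ _) M'X.
pose M := \matrix_(i < k.+1, c < n) if unlift ord0 i is Some i' then M' i' c else t 0 c.
pose P := fun i : 'I_k.+1 => if unlift ord0 i is Some i' then p' i' else p.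
have HP : rrefp M P.
  split.
  - move=> i; rewrite /P; case: unliftP => [j ->|->].
      by rewrite (@is_pivot_ext _ _ _ M M' _ j) // => c; rewrite mxE liftK.
    apply/andP; split; first by rewrite mxE unlift_none t_p.
    by apply/forallP => c; apply/implyP => cp; rewrite mxE unlift_none t_lt.
  - move=> i i'; rewrite /P; case: unliftP => [j ->|->]; case: unliftP => [j' ->|->] //=.
    + by rewrite /bump /= !add1n ltnS; apply: H2.
  - move=> i i'; rewrite /P; case: (unliftP ord0 i) => [j ->|->]; case: (unliftP ord0 i') => [j' ->|->] //=.
    + by rewrite (inj_eq (@lift_inj _ ord0)) => ne; rewrite mxE liftK H3.
    + by move=> _; rewrite mxE unlift_none t_p'.
    + by move=> _; rewrite mxE liftK vM'.
exists M; rewrite (rrefE HP) /=.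
have MX : (M <= X)%MS.
  apply/row_subP => i; case: (unliftP ord0 i) => [j ->|->].
    have -> : row (lift ord0 j) M = row j M' by apply/rowP => c; rewrite !mxE liftK.
    exact: submx_trans (row_sub _ _) M'X.
  have -> : row ord0 M = t by apply/rowP => c; rewrite !mxE unlift_none.
  exact: tX.
by rewrite -(mxrank_leqif_eq MX).2 (rrefp_rank HP) rX.
Qed.

End Rref.


Section Block.
Variable F : finFieldType.

Definition ent r s (M : 'M[F]_(r,s)) (i c : nat) : F :=
  match (insub i : option 'I_r), (insub c : option 'I_s) with
  | Some i', Some c' => M i' c'
  | _, _ => 0
  end.

Lemma entE r s (M : 'M[F]_(r,s)) i c (hi : (i < r)%N) (hc : (c < s)%N) :
  ent M i c = M (Ordinal hi) (Ordinal hc).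
Proof. by rewrite /ent (insubT (fun x => x < r)%N hi) (insubT (fun x => x < s)%N hc). Qed.

Lemma entO r s (M : 'M[F]_(r,s)) (i : 'I_r) (c : 'I_s) : ent M i c = M i c.
Proof. by rewrite /ent !valK. Qed.

Lemma ent0r r s (M : 'M[F]_(r,s)) i c : (r <= i)%N -> ent M i c = 0.
Proof. by move=> h; rewrite /ent (@insubN _ (fun x => x < r)%N) // -leqNgt. Qed.

Lemma ltn_or a b : (a < b)%N \/ (b <= a)%N.
Proof. by case: (ltnP a b); [left|right]. Qed.

Definition assemble m d k n (L : 'M[F]_(m,d)) (R : 'M[F]_(k,n)) : 'M[F]_(k,n) :=
  \matrix_(i, c) if (c < d)%N then ent L i c else R i c.

Definition restrict m d k n (N : 'M[F]_(k,n)) : 'M[F]_(m,d) :=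
  \matrix_(i, c) ent N i c.

Lemma restrict_assemble m d k n (L : 'M[F]_(m,d)) (R : 'M[F]_(k,n)) :
  (m <= k)%N -> (d <= n)%N -> restrict m d (assemble L R) = L.
Proof.
move=> mk dn; apply/matrixP => i c.
have hi : (i < k)%N by apply: leq_trans (ltn_ord i) mk.
have hc : (c < n)%N by apply: leq_trans (ltn_ord c) dn.
rewrite mxE (entE _ hi hc) mxE /= ltn_ord entO //.
Qed.

Lemma assemble_rref m d k n (L : 'M[F]_(m,d)) (R : 'M[F]_(k,n)) (pL : 'I_m -> 'I_d)
    (Q : 'I_k -> 'I_n) :
  (m <= k)%N -> (d <= n)%N -> rrefp L pL ->
  (forall i : 'I_k, (m <= i)%N ->
     [/\ (d <= Q i)%N, R i (Q i) = 1 & forall c : 'I_n, (d <= c)%N -> (c < Q i)%N -> R i c = 0]) ->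
  (forall i i' : 'I_k, (m <= i)%N -> (i < i')%N -> (Q i < Q i')%N) ->
  (forall i i' : 'I_k, (m <= i)%N -> i' != i -> R i' (Q i) = 0) ->
  exists P, [/\ rrefp (assemble L R) P, forall i : 'I_k, (m <= i)%N -> P i = Q i
             & forall i : 'I_k, (i < m)%N -> (P i < d)%N].
Proof.
move=> mk dn [L1 L2 L3] R1 R2 R3.
set N := assemble L R.
have NE : forall i c, N i c = if (c < d)%N then ent L i c else R i c by move=> i c; rewrite mxE.
have Hex : forall i : 'I_k, exists c : 'I_n, [/\ is_pivot N i c,
     (m <= i)%N -> c = Q i &
     forall h : (i < m)%N, val c = val (pL (Ordinal h))].
  move=> i; case: (ltn_or i m) => im.
    have hc : (pL (Ordinal im) < n)%N by apply: leq_trans (ltn_ord _) dn.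
    exists (Ordinal hc); split => //; last first.
      by move=> h; congr (val (pL _)); apply: val_inj.
      by move=> h; move: (leq_trans im h); rewrite ltnn.
    apply/andP; split.
      rewrite NE /= ltn_ord (entO L (Ordinal im) (pL (Ordinal im))).
      by rewrite (pivot1 (L1 _)).
    apply/forallP => c; apply/implyP => cp; rewrite NE.
    have cd : (c < d)%N by exact: (ltn_trans cp (ltn_ord (pL (Ordinal im)))).
    by rewrite cd (entE _ im cd) (pivot0 (L1 _)).
  exists (Q i); have [d1 d2 d3] := R1 i im; split => //.
    apply/andP; split; first by rewrite NE ltnNge d1 /= d2.
    apply/forallP => c; apply/implyP => cp; rewrite NE.
    case: ifP => cd; first by rewrite ent0r.
    by apply/eqP; apply: d3 => //; rewrite leqNgt cd.
  by move=> h; move: (leq_trans h im); rewrite ltnn.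
case/fin_all_exists: Hex => P HP.
exists P; split.
- split.
  + by move=> i; case: (HP i).
  + move=> i i' ii'; case: (HP i) => _ Pa Pb; case: (HP i') => _ Pa' Pb'.
    case: (ltn_or i m) => im.
      have Pid : (P i < d)%N by rewrite (Pb im) ltn_ord.
      case: (ltn_or i' m) => im'.
        by rewrite (Pb im) (Pb' im'); apply: L2.
      by rewrite (Pa' im'); apply: leq_trans Pid (match R1 _ im' with And3 a _ _ => a end).
    by rewrite (Pa im) (Pa' (leq_trans im (ltnW ii'))); apply: R2.
  + move=> i i' ne; case: (HP i) => _ Pa Pb; rewrite NE.
    case: (ltn_or i m) => im.
      have Pid : (P i < d)%N by rewrite (Pb im) ltn_ord.
      rewrite Pid; case: (ltn_or i' m) => im'; last by rewrite ent0r.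
      rewrite (entE _ im' Pid).
      have -> : Ordinal Pid = pL (Ordinal im) by apply: val_inj; rewrite /= (Pb im).
      apply: L3; apply: contra ne => /eqP [] e; apply/eqP/val_inj => //.
    rewrite (Pa im) ltnNge (match R1 _ im with And3 a _ _ => a end) /=; by apply: R3.
- by move=> i im; case: (HP i) => _ ->.
- by move=> i im; case: (HP i) => _ _ /(_ im) ->; apply: ltn_ord.
Qed.

Lemma restrictE m d k n (N : 'M[F]_(k,n)) (mk : (m <= k)%N) (dn : (d <= n)%N) i c :
  (restrict m d N) i c = N (widen_ord mk i) (widen_ord dn c).
Proof.
rewrite mxE (entE _ (leq_trans (ltn_ord i) mk) (leq_trans (ltn_ord c) dn)).
by congr (N _ _); apply: val_inj.
Qed.

Lemma restrict_rref m d k n (N : 'M[F]_(k,n)) P :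
  (m <= k)%N -> (d <= n)%N -> rrefp N P -> (forall i, (P i < d)%N = (i < m)%N) ->
  is_rref (restrict m d N) /\ assemble (restrict m d N) N = N.
Proof.
move=> mk dn HP Hd; have [H1 H2 H3] := HP.
split.
  have Hex : forall i : 'I_m, exists c : 'I_d, val c = val (P (widen_ord mk i)).
    move=> i; have h : (P (widen_ord mk i) < d)%N by rewrite Hd /= ltn_ord.
    by exists (Ordinal h).
  case/fin_all_exists: Hex => pL HpL.
  have wp : forall i, widen_ord dn (pL i) = P (widen_ord mk i) by move=> i; apply: val_inj; rewrite /= HpL.
  apply: (@rrefE _ _ _ _ pL); split.
  - move=> i; apply/andP; split; first by rewrite restrictE wp (pivot1 (H1 _)).
    apply/forallP => c; apply/implyP => cp; rewrite restrictE (pivot0 (H1 _)) //.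
    by rewrite -wp.
  - by move=> i i' ii'; rewrite !HpL; apply: H2.
  - move=> i i' ne; rewrite restrictE wp H3 //.
apply/matrixP => i c; rewrite mxE; case: ifP => // cd.
case: (ltn_or i m) => im.
  by rewrite (entE _ im cd) restrictE; congr (N _ _); apply: val_inj.
rewrite ent0r //; symmetry; apply: (pivot0 (H1 i)).
by apply: (leq_trans cd); rewrite leqNgt Hd -leqNgt.
Qed.

Lemma assemble_eqR m d k n (L : 'M[F]_(m,d)) (R R' : 'M[F]_(k,n)) :
  (forall i (c : 'I_n), (d <= c)%N -> R i c = R' i c) -> assemble L R = assemble L R'.
Proof.
move=> E; apply/matrixP => i c; rewrite !mxE; case: ifP => // cd.
by rewrite E // leqNgt cd.
Qed.

Lemma count_block m d k n (S : {set 'M[F]_(k,n)}) (R : 'M[F]_(k,n)) :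
  (m <= k)%N -> (d <= n)%N ->
  (forall N, N \in S -> exists P, [/\ rrefp N P, forall i, (P i < d)%N = (i < m)%N
        & forall i (c : 'I_n), (d <= c)%N -> N i c = R i c]) ->
  (forall L : 'M[F]_(m,d), is_rref L -> assemble L R \in S) ->
  #|S| = #|[set L : 'M[F]_(m,d) | is_rref L]|.
Proof.
move=> mk dn HS1 HS2.
have -> : S = (fun L => assemble L R) @: [set L : 'M[F]_(m,d) | is_rref L].
  apply/setP => N; apply/idP/idP.
    move=> NS; have [P [HP Hd HR]] := HS1 N NS.
    have [rr ea] := restrict_rref mk dn HP Hd.
    apply/imsetP; exists (restrict m d N); first by rewrite inE.
    by rewrite -(assemble_eqR _ HR) ea.
  by case/imsetP => L; rewrite inE => rL ->; apply: HS2.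
apply: card_in_imset => L L' _ _ e.
by rewrite -(restrict_assemble L R mk dn) e restrict_assemble.
Qed.

End Block.


Section Count.
Variable F : finFieldType.

Definition Rc m p := #|[set L : 'M[F]_(m,p) | is_rref L]|.

Lemma Rc0 p : Rc 0 p = 1%N.
Proof.
rewrite /Rc (_ : [set L : 'M[F]_(0,p) | is_rref L] = [set: 'M[F]_(0,p)]).
  by rewrite cardsT card_mx.
by apply/setP => L; rewrite !inE; apply/and3P; split; apply/forallP => -[].
Qed.

Lemma Rc_0 m : Rc m.+1 0 = 0%N.
Proof.
rewrite /Rc; apply/eqP; rewrite cards_eq0; apply/eqP/setP => L; rewrite !inE.
by apply/negP => /and3P[/forallP/(_ ord0)/existsP[[]]].
Qed.

Lemma rrefp_le k n (M : 'M[F]_(k,n)) P (i i' : 'I_k) : rrefp M P -> (i <= i')%N -> (P i <= P i')%N.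
Proof.
case=> _ H2 _; rewrite leq_eqVlt => /orP[/eqP e|h]; last by apply: ltnW; apply: H2.
by have -> : i = i' by apply: val_inj.
Qed.

Lemma Rc_rec m p : Rc m.+1 p.+1 = (Rc m p + #|F| ^ m.+1 * Rc m.+1 p)%N.
Proof.
set S := [set L : 'M[F]_(m.+1,p.+1) | is_rref L].
set B := [set L : 'M[F]_(m.+1,p.+1) | [exists i, is_pivot L i ord_max]].
rewrite /Rc -/S -(cardsID B S); congr (_ + _)%N.
  pose R : 'M[F]_(m.+1,p.+1) := \matrix_(i, c) ((i == ord_max) && (c == ord_max))%:R.
  apply: (count_block (R := R)) => //.
  - move=> N; rewrite !inE => /andP[rN /existsP[i0 pi0]].
    have [P HP] := rrefP rN; have [H1 H2 H3] := HP.
    have Pi0 : P i0 = ord_max by rewrite (pivot_unique pi0 (H1 i0)).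
    have i0m : i0 = ord_max.
      apply/val_inj/eqP; rewrite eqn_leq -ltnS ltn_ord /=; rewrite leqNgt; apply/negP => h.
      by have := H2 _ ord_max h; rewrite Pi0 ltnNge -ltnS ltn_ord.
    exists P; split => //.
    + move=> i; case: (ltn_or i m) => im.
        rewrite im; apply: leq_trans (_ : (P i < P ord_max)%N) _; first by apply: H2.
        by rewrite -i0m Pi0.
      have -> : i = ord_max by apply/val_inj/eqP; rewrite eqn_leq im -ltnS ltn_ord.
      by rewrite -{1}i0m Pi0 /= !ltnn.
    + move=> i c pc; have -> : c = ord_max by apply/val_inj/eqP; rewrite eqn_leq pc -ltnS ltn_ord.
      by rewrite [R _ _]mxE eqxx andbT -{1}Pi0 (rrefp_col HP) i0m.
  - move=> L rL; have [pL HpL] := rrefP rL.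
    have [] := @assemble_rref _ _ _ _ _ L R pL (fun _ => ord_max) (leqnSn m) (leqnSn p) HpL.
    + move=> i im; have -> : i = ord_max by apply/val_inj/eqP; rewrite eqn_leq im -ltnS ltn_ord.
      split => //; first by rewrite mxE !eqxx.
      by move=> c h1 h2; move: (leq_ltn_trans h1 h2); rewrite ltnn.
    + by move=> i i' im ii'; move: (leq_ltn_trans im ii'); rewrite ltnNge -ltnS ltn_ord.
    + move=> i i' im ne; rewrite mxE eqxx andbT.
      have ei : i = ord_max by apply/val_inj/eqP; rewrite eqn_leq im -ltnS ltn_ord.
      by rewrite ei in ne; rewrite (negbTE ne).
    + move=> P [HP HQ _]; rewrite !inE (rrefE HP) /=; apply/existsP; exists ord_max.
      by rewrite -(HQ ord_max (leqnn _)); case: HP.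
set Sb := (S :\: B).
have E : #|Sb| = (\sum_(v : 'cV[F]_m.+1) #|[set N in Sb | col ord_max N == v]|)%N.
  rewrite -sum1_card (partition_big (fun N => col ord_max N) predT) //=.
  by apply: eq_bigr => v _; rewrite -sum1_card; apply: eq_bigl => N; rewrite inE.
rewrite E (eq_bigr (fun _ => Rc m.+1 p)).
  by rewrite sum_nat_const card_mx muln1.
move=> v _.
pose R : 'M[F]_(m.+1,p.+1) := \matrix_(i, c) v i 0.
apply: (count_block (R := R)) => //.
- move=> N; rewrite !inE => /andP[/andP[/existsPn nB rN] /eqP cN].
  have [P HP] := rrefP rN; have [H1 H2 H3] := HP.
  exists P; split => //.
  + move=> i; rewrite ltn_ord; have := ltn_ord (P i); rewrite ltnS leq_eqVlt => /orP[/eqP e|] //.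
    have : P i = ord_max by apply: val_inj.
    by move=> e'; move: (nB i); rewrite -e' H1.
  + move=> i c pc; have -> : c = ord_max by apply/val_inj/eqP; rewrite eqn_leq pc -ltnS ltn_ord.
    by rewrite mxE -cN mxE.
- move=> L rL; have [pL HpL] := rrefP rL.
  have [] := @assemble_rref _ _ _ _ _ L R pL (fun _ => ord_max) (leqnn _) (leqnSn p) HpL.
  + by move=> i im; move: (leq_ltn_trans im (ltn_ord i)); rewrite ltnn.
  + by move=> i i' im; move: (leq_ltn_trans im (ltn_ord i)); rewrite ltnn.
  + by move=> i i' im; move: (leq_ltn_trans im (ltn_ord i)); rewrite ltnn.
  + move=> P [HP _ HPd]; rewrite !inE (rrefE HP) andbT.
    apply/andP; split.
      apply/existsPn => i; apply/negP => h.
      by move: (HPd i (ltn_ord i)); rewrite -(pivot_unique h (match HP with And3 a _ _ => a end i)) ltnn.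
    apply/eqP/matrixP => i c; rewrite ord1 !mxE /= ltnn ?mxE //.
Qed.

End Count.


Definition Dq q m := (\prod_(i < m) (q ^ (m - i) - 1))%N.
Definition Nq q p m := (\prod_(i < m) (q ^ (p - i) - 1))%N.

Lemma Dq_gt0 q m : (1 < q)%N -> (0 < Dq q m)%N.
Proof.
move=> q1; rewrite /Dq prodn_gt0 // => i; rewrite subn_gt0.
by rewrite -[X in (X < _)%N](expn0 q) ltn_exp2l // subn_gt0.
Qed.

Lemma Nq_0 q p m : (p < m)%N -> Nq q p m = 0%N.
Proof.
move=> pm; rewrite /Nq (bigD1 (Ordinal pm)) //= subnn expn0 subnn.
by rewrite mul0n.
Qed.

Lemma Dq_S q m : Dq q m.+1 = ((q ^ m.+1 - 1) * Dq q m)%N.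
Proof.
rewrite /Dq big_ord_recl subn0; congr (_ * _)%N; apply: eq_bigr => i _.
Qed.

Lemma Nq_S q p m : Nq q p.+1 m.+1 = ((q ^ p.+1 - 1) * Nq q p m)%N.
Proof.
rewrite /Nq big_ord_recl subn0; congr (_ * _)%N; apply: eq_bigr => i _.
Qed.

Lemma Nq_Sr q p m : Nq q p m.+1 = (Nq q p m * (q ^ (p - m) - 1))%N.
Proof. by rewrite /Nq big_ord_recr. Qed.

Lemma gauss_of q p m x : (1 < q)%N -> (x * Dq q m = Nq q p m)%N -> gauss q p m = x.
Proof.
move=> q1 E; rewrite /gauss; case: ifP => mp.
  by rewrite -/(Nq q p m) -/(Dq q m) -E mulnK // Dq_gt0.
move: E; rewrite Nq_0; last by rewrite ltnNge mp.
move/eqP; rewrite muln_eq0 => /orP[/eqP -> //|].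
by rewrite eqn0Ngt Dq_gt0.
Qed.

Section G.
Variable F : finFieldType.

Lemma cardF : (1 < #|F|)%N.
Proof.
rewrite (cardD1 (0 : F)) inE ltnS lt0n; apply/existsP; exists 1.
by rewrite !inE oner_eq0.
Qed.

Lemma Rc_gauss m p : Rc F m p = gauss #|F| p m.
Proof.
apply/esym/gauss_of; first exact: cardF.
have q1 := cardF; set q := #|F|.
elim: p m => [|p IH] [|m].
- by rewrite Rc0 /Dq /Nq !big_ord0.
- by rewrite Rc_0 Nq_0.
- by rewrite Rc0 /Dq /Nq !big_ord0.
rewrite Rc_rec Nq_S Dq_S.
have E1 := IH m; have E2 := IH m.+1; rewrite Dq_S Nq_Sr in E2.
have Dp := Dq_gt0 m q1.
case: (leqP m p) => mp; last first.
  rewrite Nq_0 // in E1 E2 *; rewrite muln0; rewrite mul0n in E2.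
  have x0 : Rc F m p = 0%N by move/eqP: E1; rewrite muln_eq0 (gtn_eqF Dp) orbF => /eqP.
  have a1 : (0 < q ^ m.+1 - 1)%N.
    by rewrite subn_gt0 -[X in (X < _)%N](expn0 q) ltn_exp2l.
  have y0 : Rc F m.+1 p = 0%N.
    by move/eqP: E2; rewrite !muln_eq0 (gtn_eqF Dp) (gtn_eqF a1) !orbF => /eqP.
  by rewrite x0 y0 muln0.
have ab : (q ^ m.+1 * q ^ (p - m) = q ^ p.+1)%N by rewrite -expnD addSn subnKC.
have a1 : (0 < q ^ m.+1)%N by rewrite expn_gt0 (ltnW q1).
have b1 : (0 < q ^ (p - m))%N by rewrite expn_gt0 (ltnW q1).
rewrite -ab; move: E1 E2 ab a1 b1.
set x := Rc F m p; set y := Rc F m.+1 p; set D := Dq q m; set N := Nq q p m.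
set a := (q ^ m.+1)%N; set b := (q ^ (p - m))%N => E1 E2 _ a1 b1.
have [a' ea] : exists a', a = a'.+1 by exists a.-1; rewrite prednK.
have [b' eb] : exists b', b = b'.+1 by exists b.-1; rewrite prednK.
rewrite ea eb in E2 *; rewrite [(a'.+1 * b'.+1)%N]mulSn addSn !subn1 !succnK in E2 *.
rewrite -E1 in E2 *.
nia.
Qed.


End G.


Section Final.
Variable F : finFieldType.

Definition mark k n (M : 'M[F]_(k,n)) (c : 'I_n) : F :=
  if [exists i, is_pivot M i c] then 1 else 0.

Definition ext k n (M : 'M[F]_(k,n)) : 'M[F]_(k.+1, n) :=
  col_mx (\row_c mark M c) M.

Lemma EXT_ext n k (X : 'M[F]_n) : EXT k X = ext (RE k X).
Proof. by []. Qed.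

Lemma ext_top k n (M : 'M[F]_(k,n)) c : ext M (lshift k (ord0 : 'I_1)) c = mark M c.
Proof.
transitivity ((\row_c mark M c : 'rV[F]_n) ord0 c); first exact: col_mxEu.
by rewrite mxE.
Qed.

Lemma ext_bot k n (M : 'M[F]_(k,n)) i c : ext M (rshift 1 i) c = M i c.
Proof. exact: col_mxEd. Qed.

Lemma mark_eq k k' n (M : 'M[F]_(k,n)) (M' : 'M[F]_(k',n)) c :
  mark M c = mark M' c -> [exists i, is_pivot M i c] = [exists i, is_pivot M' i c].
Proof.
rewrite /mark; do 2 case: ifP => //; move=> _ _ /eqP; by rewrite ?oner_eq0 // eq_sym oner_eq0.
Qed.

Lemma entry_shift r n j (E : 'M[F]_(r,n)) i (c' : 'I_j) (h : (n - j + c' < n)%N) :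
  entry E i (n - j + c') = E i (Ordinal h).
Proof. by rewrite /entry (insubT (fun x => x < n)%N h). Qed.

Lemma fc_shift_lt n j (c' : 'I_j) : (j <= n)%N -> (n - j + c' < n)%N.
Proof. by move=> jn; have := ltn_ord c'; lia. Qed.

Lemma fcE r n j (E : 'M[F]_(r,n)) i (c' : 'I_j) :
  (firstcols j E) i c' = entry E i (n - j + c').
Proof. by rewrite mxE. Qed.

Lemma fc_eq k n j (M M' : 'M[F]_(k,n)) : (j <= n)%N ->
  firstcols j (ext M) = firstcols j (ext M') ->
  forall c : 'I_n, (n - j <= c)%N ->
    mark M c = mark M' c /\ forall i, M i c = M' i c.
Proof.
move=> jn E c hc.
have hc' : (c - (n - j) < j)%N by have := ltn_ord c; lia.
have e : forall r, (ext M) r c = (ext M') r c.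
  move=> r; move/matrixP: E => /(_ r (Ordinal hc')); rewrite !fcE.
  have h : (n - j + Ordinal hc' < n)%N by apply: fc_shift_lt.
  rewrite !(entry_shift _ _ h).
  have -> : Ordinal h = c by apply: val_inj; rewrite /=; lia.
  by [].
split; first by rewrite -(ext_top M) -(ext_top M') e.
by move=> i; rewrite -(ext_bot M) -(ext_bot M') e.
Qed.

Lemma fc_eqR k n j (M M' : 'M[F]_(k,n)) : (j <= n)%N ->
  (forall c : 'I_n, (n - j <= c)%N -> mark M c = mark M' c /\ forall i, M i c = M' i c) ->
  firstcols j (ext M) = firstcols j (ext M').
Proof.
move=> jn H; apply/matrixP => r c'; rewrite !fcE.
have h := fc_shift_lt c' jn; rewrite !(entry_shift _ _ h).
have [H1 H2] := H (Ordinal h) (leq_addr _ _).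
have -> : r = unsplit (@split 1 k r) by rewrite splitK.
case: (@split 1 k r) => r' /=.
  by rewrite (ord1 r') !ext_top.
by rewrite !ext_bot.
Qed.

Lemma widen_inj x k (h : (x <= k)%N) : injective (widen_ord h).
Proof. by move=> a b /(congr1 val) /= e; apply: val_inj. Qed.

Lemma card_lt k x : (x <= k)%N -> #|[set i : 'I_k | (i < x)%N]| = x.
Proof.
move=> xk; suff -> : [set i : 'I_k | (i < x)%N] = widen_ord xk @: [set: 'I_x].
  by rewrite card_imset ?cardsT ?card_ord //; apply: widen_inj.
apply/setP => i.
rewrite inE; apply/idP/imsetP => [h|[i' _ ->]]; last by rewrite /= ltn_ord.
by exists (Ordinal h) => //; apply: val_inj.
Qed.

Lemma downset k (Q : {set 'I_k}) m :
  (forall i i' : 'I_k, (i' <= i)%N -> i \in Q -> i' \in Q) -> #|Q| = m ->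
  forall i, (i \in Q) = (i < m)%N.
Proof.
move=> down cQ i; apply/idP/idP => [Qi|im].
  have : [set i' : 'I_k | (i' < i.+1)%N] \subset Q.
    by apply/subsetP => i'; rewrite inE ltnS => h; apply: down h Qi.
  by move/subset_leq_card; rewrite card_lt ?cQ.
apply/negP => nQ.
have : Q \subset [set i' : 'I_k | (i' < i)%N].
  apply/subsetP => i' Qi'; rewrite inE ltnNge; apply/negP => h.
  by move: nQ; rewrite (down _ _ h Qi').
move/subset_leq_card; rewrite card_lt ?cQ; last exact: ltnW.
by rewrite leqNgt im.
Qed.

Lemma ext_top0 k n (M : 'M[F]_(k,n)) c : ext M ord0 c = mark M c.
Proof.
have -> : (ord0 : 'I_k.+1) = lshift k (ord0 : 'I_1) by apply: val_inj.
exact: ext_top.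
Qed.

Lemma mark1 k n (M : 'M[F]_(k,n)) c : (mark M c == 1) = [exists i, is_pivot M i c].
Proof. by rewrite /mark; case: ifP; rewrite ?eqxx // eq_sym oner_eq0. Qed.

Lemma wcount k n j (M : 'M[F]_(k,n)) P : (j <= n)%N -> rrefp M P ->
  #|[set c' : 'I_j | (firstcols j (ext M)) ord0 c' == 1]| = #|[set i | (n - j <= P i)%N]|.
Proof.
move=> jn HP; pose s := fun c' : 'I_j => Ordinal (fc_shift_lt c' jn).
have sinj : injective s by move=> a b /(congr1 val) /= /addnI e; apply: val_inj.
rewrite -(card_imset _ sinj) -(card_imset _ (rrefp_inj HP)).
apply: eq_card => c; apply/imsetP/imsetP.
  case=> c'; rewrite inE fcE (entry_shift _ _ (fc_shift_lt c' jn)) ext_top0 mark1.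
  case/existsP => i pi ->; exists i; last by apply: pivot_unique pi (match HP with And3 a _ _ => a end i).
  by rewrite inE -(pivot_unique pi (match HP with And3 a _ _ => a end i)) /= leq_addr.
case=> i; rewrite inE => hi ->.
have h : (P i - (n - j) < j)%N by have := ltn_ord (P i); lia.
have e : s (Ordinal h) = P i by apply: val_inj => /=; lia.
exists (Ordinal h) => //.
rewrite inE fcE (entry_shift _ _ (fc_shift_lt (Ordinal h) jn)).
have -> : Ordinal (fc_shift_lt (Ordinal h) jn) = P i by [].
rewrite ext_top0 mark1; apply/existsP; exists i; by case: HP.
Qed.

Lemma count_main n k j (A : 'M[F]_(k.+1, j)) (M0 : 'M[F]_(k,n)) :
  (j <= n)%N -> is_rref M0 -> firstcols j (ext M0) = A ->
  #|[set M : 'M[F]_(k,n) | is_rref M && (firstcols j (ext M) == A)]| =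
  Rc F (k - #|[set c : 'I_j | A ord0 c == 1]|) (n - j).
Proof.
move=> jn rM0 E0.
set w := #|[set c : 'I_j | A ord0 c == 1]|.
set d := (n - j)%N.
have downM : forall (M : 'M[F]_(k,n)) P, rrefp M P -> firstcols j (ext M) = A ->
    forall i, (P i < d)%N = (i < k - w)%N.
  move=> M P HP EM i.
  have cQ : #|[set i | (P i < d)%N]| = (k - w)%N.
    have HC := cardsC [set i | (P i < d)%N]; rewrite card_ord in HC.
    have EC : ~: [set i | (P i < d)%N] = [set i | (d <= P i)%N].
      by apply/setP => i'; rewrite !inE -leqNgt.
    rewrite EC -(wcount jn HP) EM -/w in HC.
    lia.
  rewrite -(downset _ cQ) ?inE //.
  move=> a b ba; rewrite !inE; apply: leq_ltn_trans; exact: rrefp_le HP ba.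
apply: (count_block (R := M0)); first exact: leq_subr.
- exact: leq_subr.
- move=> N; rewrite inE => /andP[rN /eqP EN].
  have [P HP] := rrefP rN; exists P; split => //; first exact: (downM _ _ HP EN).
  move=> i c dc; have := fc_eq jn (etrans EN (esym E0)) dc; by case=> _ ->.
- move=> L rL; have [pL HpL] := rrefP rL; have [P0 HP0] := rrefP rM0.
  have [H1 H2 H3] := HP0.
  have d0 := downM _ _ HP0 E0.
  have dP0 : forall i : 'I_k, (k - w <= i)%N -> (d <= P0 i)%N by move=> i h; rewrite leqNgt d0 -leqNgt.
  have [] := @assemble_rref _ _ _ _ _ L M0 pL P0 (leq_subr _ _) (leq_subr _ _) HpL.
  + move=> i im; split; [exact: dP0 | exact: pivot1 (H1 i) |].
    by move=> c _ h; apply: pivot0 (H1 i) h.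
  + by move=> i i' _; apply: H2.
  + by move=> i i' _; apply: H3.
  move=> P [HP HPQ HPd]; rewrite inE (rrefE HP) /= -E0; apply/eqP; apply: fc_eqR => // c dc.
  split; last by move=> i; rewrite mxE ltnNge dc.
  rewrite /mark; congr (if _ then _ else _); apply/existsP/existsP => -[i pi].
    have ci : c = P i by apply: pivot_unique pi (match HP with And3 a _ _ => a end i).
    have im : (k - w <= i)%N.
      rewrite leqNgt; apply/negP => h; move: (HPd i h); rewrite -ci ltnNge dc.
      by [].
    by exists i; rewrite ci HPQ.
  have ci : c = P0 i by apply: pivot_unique pi (H1 i).
  have im : (k - w <= i)%N by rewrite leqNgt -d0 -ci -leqNgt.
  exists i; rewrite ci -HPQ //; by case: HP.
Qed.

End Final.


Section Gr.
Variable F : finFieldType.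

Lemma RE_spec n k (X : 'M[F]_n) : X \in Grass F n k -> is_rref (RE k X) /\ (<<RE k X>>%MS = X).
Proof.
rewrite inE => /andP[/eqP gX /eqP rX].
have [M /andP[rM MX]] := rref_exists rX.
rewrite /RE; case: pickP => [M' /andP[rM' /eqP gM'] // | H].
have e : <<M>>%MS = X by rewrite -gX; apply/genmxP.
by move: (H M); rewrite rM e eqxx.
Qed.

Lemma RE_genmx n k (M : 'M[F]_(k,n)) : is_rref M -> <<M>>%MS \in Grass F n k /\ RE k <<M>>%MS = M.
Proof.
move=> rM; have [P HP] := rrefP rM.
have G : <<M>>%MS \in Grass F n k.
  by rewrite inE genmx_id eqxx /= mxrank_gen (rrefp_rank HP).
split => //; have [rR gR] := RE_spec G.
by apply: rref_uniq => //; apply/genmxP.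
Qed.

End Gr.

Theorem lemma3 (F : finFieldType) (n k j : nat) (A : 'M[F]_(k.+1, j)) :
  (k <= n)%N -> (1 <= j)%N -> (j <= n)%N ->
  (exists2 Y, Y \in Grass F n k & firstcols j (EXT k Y) = A) ->
  #|[set X in Grass F n k | firstcols j (EXT k X) == A]| =
    gauss #|F| (n - j) (k - #|[set c : 'I_j | A ord0 c == 1]|).
Proof.
move=> kn j1 jn [Y YG EY].
have [rY gY] := RE_spec YG.
have -> : [set X in Grass F n k | firstcols j (EXT k X) == A] =
    (fun M => <<M>>%MS) @: [set M : 'M[F]_(k,n) | is_rref M && (firstcols j (ext M) == A)].
  apply/setP => X; apply/idP/imsetP.
    rewrite inE => /andP[XG EX]; have [rX gX] := RE_spec XG.
    by exists (RE k X) => //; rewrite inE rX.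
  case=> M; rewrite [M \in _]inE => /andP[rM EM] ->; have [G R] := RE_genmx rM.
  by rewrite inE G EXT_ext R.
rewrite card_in_imset.
  by rewrite (count_main jn rY) -?Rc_gauss // -EY.
move=> M M'; rewrite !inE => /andP[rM _] /andP[rM' _] e.
by rewrite -(proj2 (RE_genmx rM)) e (proj2 (RE_genmx rM')).
Qed.
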